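(* Let $n \ge 2$ be an integer, let $\varepsilon > 0$, and let $p_s, p_{is}, p_d, p_{id}, p_m, p_{im}, p_{ic} \in (0,1]$. Define \[ P_{\mathrm{all}} = p_s\, p_{is}^{\,n-1}\, p_d^{\,n-1}\, p_{id}^{\,n(\lceil \log_2 n\rceil - 2) + 2}, \qquad P_{\mathrm{lin}} = p_s\, p_{is}^{\,n-1}\, p_d^{\,n-1}\, p_{id}^{\,n(\lceil n/2\rceil - 2) + 2}, \] and let $P_{\mathrm{ad}}$ be a real number satisfying \[ P_{\mathrm{ad}} \ge p_s^{\,n+\lfloor n/2\rfloor}\, p_{is}^{\,n+\lceil n/2\rceil - 1}\, p_d^{\,2(n-1)}\, p_{id}^{\,2}\, p_m^{\,n-1}\, p_{im}^{\,n}\, p_{ic}^{\,n}. \] Assume the first-order identifications $p_s = p_{is} = 1$, $p_m = p_d$, and $p_{im} = p_{ic} = p_{id}$. Then: (i) if $p_d \ge (1+\varepsilon)\, p_{id}^{\frac{n}{n-1}\left(\lceil \log_2 n\rceil/2 - 2\right)}$, then $P_{\mathrm{ad}} \ge (1+\varepsilon)^{2(n-1)} P_{\mathrm{all}}$; (ii) if $p_d \ge (1+\varepsilon)\, p_{id}^{\frac{n}{n-1}\left(\lceil n/2\rceil/2 - 2\right)}$, then $P_{\mathrm{ad}} \ge (1+\varepsilon)^{2(n-1)} P_{\mathrm{lin}}$.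
   Context: Setting: preparation of the $n$-qubit GHZ state $\frac{1}{\sqrt 2}(|0\rangle^{\otimes n} + |1\rangle^{\otimes n})$ under a worst-case error model in which every error (in a gate, an idle period, or a measurement) makes the final state incorrect and errors never cancel. The parameters are: $p_s$ = probability a single-qubit gate succeeds; $p_d$ = probability a two-qubit (CNOT) gate succeeds; $p_m$ = probability a measurement returns the correct value; $p_{is}$, $p_{id}$, $p_{im}$, $p_{ic}$ = probability a qubit remains coherent while idling during a single-qubit gate, a two-qubit gate, a measurement, and an intermediate classical computation, respectively. $P_{\mathrm{all}}$ is the success probability of the non-adaptive protocol with all-to-all connectivity (Hadamard on one qubit, then $\lceil\log_2 n\rceil$ layers of CNOTs, doubling the number of entangled qubits each layer); $P_{\mathrm{lin}}$ is that of the non-adaptive protocol with linear nearest-neighbor connectivity (Hadamard on a middle qubit, then CNOT layers spreading outward two qubits per layer); $P_{\mathrm{ad}}$ is the success probability of the constant-depth adaptive protocol on $2n-1$ qubits (Hadamards, two layers of CNOTs onto $n-1$ auxiliary qubits, measurement of the auxiliaries, then Pauli-$X$ corrections determined by prefix parities of the outcomes). The paper writes such comparisons with $\gtrsim$, meaning the inequality holds after applying the first-order assumptions $p_s \approx 1 \approx p_{is}$, $p_d \approx p_m$, $p_{id} \approx p_{im} \approx p_{ic}$; here these are imposed as equalities. *)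

(* Defs.v *)
From Stdlib Require Import Reals ZArith Arith.
Open Scope R_scope.

Definition clog2 (n : nat) : nat := Nat.log2_up n.
Definition ceil_half (n : nat) : nat := Nat.div (n + 1) 2.
Definition floor_half (n : nat) : nat := Nat.div n 2.

Definition P_all (n : nat) (ps pis pd pid : R) : R :=
  ps * pis ^ (n - 1) * pd ^ (n - 1) *
  powerRZ pid (Z.of_nat n * (Z.of_nat (clog2 n) - 2) + 2)%Z.

Definition P_lin (n : nat) (ps pis pd pid : R) : R :=
  ps * pis ^ (n - 1) * pd ^ (n - 1) *
  powerRZ pid (Z.of_nat n * (Z.of_nat (ceil_half n) - 2) + 2)%Z.

Definition P_ad_lb (n : nat) (ps pis pd pid pm pim pic : R) : R :=
  ps ^ (n + floor_half n) * pis ^ (n + ceil_half n - 1) * pd ^ (2 * (n - 1)) *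
  pid ^ 2 * pm ^ (n - 1) * pim ^ n * pic ^ n.

(* Main.v *)
Require Import Defs.
From Stdlib Require Import Reals ZArith Arith Lra Lia.
Open Scope R_scope.

Lemma key (m k : nat) (e pd pid Pad : R) :
  (1 <= m)%nat -> 0 < e -> 0 < pid -> 0 < pd ->
  Pad >= pd ^ (2 * m) * pid ^ 2 * pd ^ m * pid ^ S m * pid ^ S m ->
  pd >= (1 + e) * Rpower pid (INR (S m) / INR m * (INR k / 2 - 2)) ->
  Pad >= (1 + e) ^ (2 * m) *
    (1 * 1 ^ m * pd ^ m * powerRZ pid (Z.of_nat (S m) * (Z.of_nat k - 2) + 2)%Z).
Proof.
  intros Hm He Hpid Hpd HP Hd.
  set (A := Rpower pid (INR (S m) / INR m * (INR k / 2 - 2))) in *.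
  assert (HA : 0 < A) by (unfold A, Rpower; apply exp_pos).
  assert (H1 : ((1 + e) * A) ^ (2 * m) <= pd ^ (2 * m)).
  { apply pow_incr; split; [nra | lra]. }
  assert (Hm0 : INR m <> 0) by (apply not_0_INR; lia).
  assert (H2 : A ^ (2 * m) = Rpower pid (INR (S m) * (INR k - 4))).
  { rewrite <- Rpower_pow by exact HA. unfold A. rewrite Rpower_mult.
    f_equal. rewrite mult_INR. simpl (INR 2). field. exact Hm0. }
  assert (H3 : powerRZ pid (Z.of_nat (S m) * (Z.of_nat k - 2) + 2)%Z =
               Rpower pid (INR (S m) * (INR k - 4)) * (pid ^ 2 * pid ^ S m * pid ^ S m)).
  { rewrite powerRZ_Rpower by exact Hpid.
    rewrite plus_IZR, mult_IZR, minus_IZR, <- !INR_IZR_INZ.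
    rewrite <- !pow_add, <- Rpower_pow by exact Hpid.
    rewrite <- Rpower_plus. f_equal. rewrite !plus_INR. simpl (INR 2). ring. }
  rewrite H3. rewrite Rpow_mult_distr, H2 in H1.
  set (B := Rpower pid (INR (S m) * (INR k - 4))) in *.
  assert (HX : 0 < pd ^ m * (pid ^ 2 * pid ^ S m * pid ^ S m)).
  { pose proof (pow_lt pd m Hpd); pose proof (pow_lt pid 2 Hpid); pose proof (pow_lt pid (S m) Hpid); apply Rmult_lt_0_compat; [assumption|]; apply Rmult_lt_0_compat; [apply Rmult_lt_0_compat|]; assumption. }
  rewrite pow1.
  assert (pd ^ (2 * m) * (pd ^ m * (pid ^ 2 * pid ^ S m * pid ^ S m)) >=
          (1 + e) ^ (2 * m) * B * (pd ^ m * (pid ^ 2 * pid ^ S m * pid ^ S m))).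
  { apply Rle_ge, Rmult_le_compat_r; lra. }
  apply Rge_trans with (1 := HP).
  replace (pd ^ (2 * m) * pid ^ 2 * pd ^ m * pid ^ S m * pid ^ S m) with
    (pd ^ (2 * m) * (pd ^ m * (pid ^ 2 * pid ^ S m * pid ^ S m))) by ring.
  replace ((1 + e) ^ (2 * m) * (1 * 1 * pd ^ m * (B * (pid ^ 2 * pid ^ S m * pid ^ S m))))
    with ((1 + e) ^ (2 * m) * B * (pd ^ m * (pid ^ 2 * pid ^ S m * pid ^ S m))) by ring.
  exact H.
Qed.

Theorem theorem1 (n : nat) (eps ps pis pd pid pm pim pic Pad : R) :
  (2 <= n)%nat -> 0 < eps ->
  0 < ps <= 1 -> 0 < pis <= 1 -> 0 < pd <= 1 -> 0 < pid <= 1 ->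
  0 < pm <= 1 -> 0 < pim <= 1 -> 0 < pic <= 1 ->
  Pad >= P_ad_lb n ps pis pd pid pm pim pic ->
  ps = 1 -> pis = 1 -> pm = pd -> pim = pid -> pic = pid ->
  (pd >= (1 + eps) * Rpower pid (INR n / INR (n - 1) * (INR (clog2 n) / 2 - 2)) ->
   Pad >= (1 + eps) ^ (2 * (n - 1)) * P_all n ps pis pd pid) /\
  (pd >= (1 + eps) * Rpower pid (INR n / INR (n - 1) * (INR (ceil_half n) / 2 - 2)) ->
   Pad >= (1 + eps) ^ (2 * (n - 1)) * P_lin n ps pis pd pid).
Proof.
  intros Hn He Hps Hpis Hpd Hpid Hpm Hpim Hpic HP -> -> -> -> ->.
  destruct n as [|m]; [lia|].

  unfold P_ad_lb in HP. rewrite !pow1 in HP. assert (Em : (S m - 1)%nat = m) by lia. rewrite Em in HP |- *.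
  assert (HP' : Pad >= pd ^ (2 * m) * pid ^ 2 * pd ^ m * pid ^ S m * pid ^ S m) by lra.
  split; intro H; unfold P_all, P_lin; rewrite ?Em in *; apply key; (lia || lra || auto).
Qed.
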